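(* In the two-tier residency matching game described in the context, suppose $v\ge \frac{e}{e-1}$ and high-tier doctors submit lists of length $K\ge 1$. Then, under the large market approximation, the social welfare resulting from matches of high-tier doctors with high-tier hospitals in equilibrium is not less than the corresponding social welfare when $K=1$.
   Context: Model: there are $n$ high-tier and $rn$ low-tier doctors ($r>0$), and $n$ high-tier and $rn$ low-tier hospitals, each with one position. Every hospital prefers every high doctor to every low doctor and every doctor prefers every high hospital to every low hospital; within a tier, preferences are independent uniformly random permutations. Each doctor submits a ranked list of hospitals of the allowed length: a strategy $(k,K-k)$ lists his $k$ most preferred high hospitals followed by his $K-k$ most preferred low hospitals. Hospitals submit full true rankings; doctor-proposing deferred acceptance is run. Values: a doctor gets $v>1$ if matched to a high hospital, $1$ if matched to a low one, $0$ if unmatched; a hospital gets $v$ from a high doctor, $1$ from a low doctor, $0$ if unfilled; social welfare is the sum of all agents' values. Large market approximation: $n\to\infty$ with $r,K,v$ fixed; each application is accepted independently with a probability determined by the aggregate strategy profile via fixed-point equations (expected matched doctors = expected hospitals receiving at least one admissible application; a hospital receiving on average $\lambda$ applications gets none with probability $e^{-\lambda}$). Equilibrium means the symmetric Nash equilibrium (all doctors of a tier use the same, possibly mixed, strategy, each maximizing expected value given the acceptance probabilities). *)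

(* Defs.v *)
From Stdlib Require Import Reals Lra Lia.
Open Scope R_scope.

(* Large-market approximation of the two-tier matching game, high-tier doctor
   side.  All quantities are normalised per n (n high doctors = n high
   hospitals; r*n low hospitals).

   A (possibly mixed) symmetric strategy of the high doctors is a probability
   vector p over k = 0..K, where k means the pure strategy (k, K-k).

   a = probability that an application of a high doctor to a high hospital is
       accepted; b = probability that an application of a high doctor to a low
       hospital is accepted.  (Hospitals of both tiers prefer every high doctor
       to every low doctor, so only high doctors' applications are admissible
       competitors for high doctors; low doctors do not influence a, b.) *)

Definition is_mixed (K : nat) (p : nat -> R) : Prop :=
  (forall k : nat, (k <= K)%nat -> 0 <= p k) /\ sum_f_R0 p K = 1.

Definition matched_HH (K : nat) (p : nat -> R) (a : R) : R :=
  sum_f_R0 (fun k => p k * (1 - (1 - a) ^ k)) K.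

(* expected number of applications of high doctors to high hospitals, per high
   hospital: a doctor playing (k,K-k) applies to his j-th high hospital iff his
   first j-1 were rejected, i.e. sum_{j<k} (1-a)^j = (1-(1-a)^k)/a times. *)
Definition apps_HH (K : nat) (p : nat -> R) (a : R) : R :=
  sum_f_R0 (fun k => p k * (1 - (1 - a) ^ k) / a) K.

Definition matched_HL (K : nat) (p : nat -> R) (a b : R) : R :=
  sum_f_R0 (fun k => p k * (1 - a) ^ k * (1 - (1 - b) ^ (K - k))) K.

Definition apps_HL (K : nat) (p : nat -> R) (a b : R) : R :=
  sum_f_R0 (fun k => p k * (1 - a) ^ k * (1 - (1 - b) ^ (K - k)) / b) K.

Definition payoff (v : R) (K : nat) (a b : R) (k : nat) : R :=
  v * (1 - (1 - a) ^ k) + (1 - a) ^ k * (1 - (1 - b) ^ (K - k)).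

(* Convention: if a tier of hospitals receives no applications at all, the
   acceptance probability is 1 (limit lambda -> 0 of (1-e^{-lambda})/lambda). *)
Definition high_equilibrium (v r : R) (K : nat) (p : nat -> R) (a b : R) : Prop :=
  is_mixed K p /\
  0 < a <= 1 /\ 0 < b <= 1 /\
  matched_HH K p a = 1 - exp (- apps_HH K p a) /\
  (apps_HH K p a = 0 -> a = 1) /\
  matched_HL K p a b / r = 1 - exp (- (apps_HL K p a b / r)) /\
  (apps_HL K p a b = 0 -> b = 1) /\
  (forall k : nat, (k <= K)%nat -> 0 < p k ->
     forall j : nat, (j <= K)%nat -> payoff v K a b j <= payoff v K a b k).

(* social welfare (per n) from matches of high doctors with high hospitals:
   each such match gives v to the doctor and v to the hospital. *)
Definition hh_welfare (v : R) (K : nat) (p : nat -> R) (a : R) : R :=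
  2 * v * matched_HH K p a.

(* Main.v *)
Require Import Defs.
From Stdlib Require Import Reals Lra Lia Psatz.
Open Scope R_scope.

Lemma pow_le1 (x : R) (n : nat) : 0 <= x <= 1 -> x ^ n <= 1.
Proof. intros H. rewrite <- (pow1 n). apply pow_incr. lra. Qed.

Lemma pow_le_x (x : R) (n : nat) : 0 <= x <= 1 -> (1 <= n)%nat -> x ^ n <= x.
Proof.
  intros H Hn. destruct n as [|n]; [lia|]. simpl.
  pose proof (pow_le1 x n H). pose proof (pow_le x n (proj1 H)). nra.
Qed.

Lemma term_ge (p : nat -> R) (a : R) (k : nat) : 0 < a <= 1 -> 0 <= p k -> (1 <= k)%nat ->
  p k <= p k * (1 - (1 - a) ^ k) / a.
Proof.
  intros Ha Hp Hk. pose proof (pow_le_x (1 - a) k ltac:(lra) Hk).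
  unfold Rdiv. rewrite Rmult_assoc.
  assert (1 <= (1 - (1 - a) ^ k) * / a).
  { apply (Rmult_le_reg_r a); [lra|]. rewrite Rmult_assoc, Rinv_l; lra. }
  nra.
Qed.

Lemma term_nn (p : nat -> R) (a : R) (k : nat) : 0 < a <= 1 -> 0 <= p k ->
  0 <= p k * (1 - (1 - a) ^ k) / a.
Proof.
  intros Ha Hp. pose proof (pow_le1 (1 - a) k ltac:(lra)).
  unfold Rdiv. apply Rmult_le_pos; [nra|]. left; apply Rinv_0_lt_compat; lra.
Qed.

Lemma apps_bounds (K : nat) (p : nat -> R) (a : R) : 0 < a <= 1 ->
  (forall k, (k <= K)%nat -> 0 <= p k) -> forall n, (n <= K)%nat ->
  0 <= sum_f_R0 (fun k => p k * (1 - (1 - a) ^ k) / a) n /\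
  sum_f_R0 p n - p 0%nat <= sum_f_R0 (fun k => p k * (1 - (1 - a) ^ k) / a) n.
Proof.
  intros Ha Hp n. induction n as [|n IH]; intros Hn.
  - simpl. replace (p 0%nat * (1 - 1) / a) with 0 by (field; lra). lra.
  - rewrite !tech5. destruct (IH ltac:(lia)) as [H1 H2].
    pose proof (term_ge p a (S n) Ha (Hp (S n) Hn) ltac:(lia)).
    pose proof (Hp (S n) Hn).
    idtac. split; lra.
Qed.

Lemma apps_matched (K : nat) (p : nat -> R) (a : R) : 0 < a ->
  apps_HH K p a * a = matched_HH K p a.
Proof.
  intros Ha. unfold apps_HH, matched_HH. induction K as [|K IH]; simpl.
  - field; lra.
  - rewrite Rmult_plus_distr_r, IH. f_equal. field; lra.
Qed.

Lemma concav (l : R) : 0 < l < 1 -> exp (- l) < (1 - l) + l * exp (-1).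
Proof.
  intros Hl.
  pose proof (exp_ineq1 l ltac:(lra)).
  pose proof (exp_ineq1_le (l - 1)).
  assert (E1 : exp l * exp (- l) = 1) by (rewrite <- exp_plus; replace (l + - l) with 0 by ring; apply exp_0).
  assert (E2 : exp (l - 1) * exp (- l) = exp (-1)) by (rewrite <- exp_plus; f_equal; ring).
  pose proof (exp_pos (- l)).
  assert (A1 : exp (- l) * (1 + l) < 1) by (rewrite <- E1, (Rmult_comm (exp l)); apply Rmult_lt_compat_l; lra).
  assert (A2 : exp (- l) * l <= exp (-1)) by (rewrite <- E2; rewrite (Rmult_comm (exp (l-1))); apply Rmult_le_compat_l; lra).
  assert (B1 : (1 - l) * (exp (- l) * (1 + l)) < (1 - l) * 1) by (apply Rmult_lt_compat_l; lra).
  assert (B2 : l * (exp (- l) * l) <= l * exp (-1)) by (apply Rmult_le_compat_l; lra).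
  nra.
Qed.

Theorem lemma3 (v r : R) (K : nat) (pK p1 : nat -> R) (aK bK a1 b1 : R) :
  exp 1 / (exp 1 - 1) <= v -> 0 < r -> (1 <= K)%nat ->
  high_equilibrium v r K pK aK bK ->
  high_equilibrium v r 1 p1 a1 b1 ->
  hh_welfare v 1 p1 a1 <= hh_welfare v K pK aK.
Proof.
  intros Hv Hr HK [[HpK HsK] [HaK [HbK [HmK [HzK [_ [_ HeqK]]]]]]]
    [[Hp1 Hs1] [Ha1 [Hb1 [Hm1 _]]]].
  assert (He : 1 < exp 1) by (pose proof (exp_ineq1 1 ltac:(lra)); lra).
  assert (Hv1 : 1 < v).
  { apply Rlt_le_trans with (exp 1 / (exp 1 - 1)); auto.
    apply (Rmult_lt_reg_r (exp 1 - 1)); [lra|]. unfold Rdiv.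
    rewrite Rmult_assoc, Rinv_l; lra. }
  assert (Hva : forall a, (exp 1 - 1) / exp 1 < a -> 1 < v * a).
  { intros a Ha. assert (0 < (exp 1 - 1) / exp 1).
    { unfold Rdiv; apply Rmult_lt_0_compat; [lra|apply Rinv_0_lt_compat; lra]. }
    assert (exp 1 / (exp 1 - 1) * ((exp 1 - 1) / exp 1) = 1) by (field; lra).
    assert (exp 1 / (exp 1 - 1) * ((exp 1 - 1) / exp 1) < exp 1 / (exp 1 - 1) * a).
    { apply Rmult_lt_compat_l; auto. unfold Rdiv; apply Rmult_lt_0_compat; [lra|apply Rinv_0_lt_compat; lra]. }
    nra. }
  set (lK := apps_HH K pK aK) in *.
  assert (HlK : 1 <= lK).
  { destruct (apps_bounds K pK aK HaK HpK K (le_n K)) as [B1 B2].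
    fold (apps_HH K pK aK) in B1, B2. fold lK in B1, B2.
    destruct (Rle_or_lt 1 lK) as [H|H]; auto. exfalso.
    assert (Hp0 : 0 < pK 0%nat) by lra.
    assert (Hbig : 1 < v * aK).
    { destruct B1 as [B1|B1].
      - apply Hva.
        pose proof (apps_matched K pK aK (proj1 HaK)) as AM. fold lK in AM.
        rewrite HmK in AM. fold lK in AM.
        pose proof (concav lK ltac:(lra)).
        assert (Q : (exp 1 - 1) / exp 1 = 1 - exp (-1)) by (replace (-1) with (- (1)) by ring; rewrite exp_Ropp; field; lra).
        rewrite Q.
        assert (lK * (1 - exp (-1)) < lK * aK) by lra.
        apply (Rmult_lt_reg_l lK); lra.
      - rewrite (HzK (eq_sym B1)). lra. }
    pose proof (HeqK 0%nat ltac:(lia) Hp0 1%nat HK) as Hc.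
    unfold payoff in Hc. rewrite !pow_1, !pow_O, Nat.sub_0_r in Hc.
    pose proof (pow_le1 (1 - bK) (K - 1) ltac:(lra)).
    pose proof (pow_le (1 - bK) K ltac:(lra)).
    assert (0 <= (1 - aK) * (1 - (1 - bK) ^ (K - 1))) by (apply Rmult_le_pos; lra).
    lra. }
  assert (HmK1 : 1 - exp (-1) <= matched_HH K pK aK).
  { rewrite HmK. fold lK. assert (exp (- lK) <= exp (-1)).
    { destruct HlK as [H|H]; [left; apply exp_increasing; lra| rewrite <- H; right; f_equal; ring]. }
    lra. }
  assert (Hm11 : matched_HH 1 p1 a1 <= 1 - exp (-1)).
  { rewrite Hm1. assert (apps_HH 1 p1 a1 = p1 1%nat).
    { unfold apps_HH. simpl. field. lra. }
    rewrite H. simpl in Hs1. pose proof (Hp1 0%nat ltac:(lia)).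
    assert (exp (- p1 1%nat) >= exp (-1)).
    { destruct (Req_dec (p1 1%nat) 1) as [E|E]; [rewrite E; right; f_equal; ring|].
      left; apply exp_increasing; lra. }
    lra. }
  unfold hh_welfare. nra.
Qed.
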